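(* Let $0<q<1$. Then \[ q^{2}(1+q)^{2}+q^{4}+\sum_{n=1}^{\infty}\frac{(1/2|q^{2})_{n}^{2}}{([n+1]_{q^{2}}!)^{2}}\,q^{4n+4}=\frac{(1+q)^{4}}{\pi_{q}}\,q^{9/4}. \]
   Context: Let $0<q<1$ and write $q^{x}=e^{x\log q}$. $[z]_{q^2}=\frac{1-q^{2z}}{1-q^2}$; $[0]_{q^2}!=1$, $[n]_{q^2}!=\prod_{k=1}^n[k]_{q^2}$; $(1/2|q^2)_n=\prod_{k=0}^{n-1}[1/2+k]_{q^2}$. With $(z;q)_\infty=\prod_{k\ge0}(1-zq^k)$, $\pi_q=(1-q^2)q^{1/4}\frac{(q^2;q^2)_\infty^2}{(q;q^2)_\infty^2}$. *)

(* Defs.v *)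
From Stdlib Require Import Reals Lra ClassicalEpsilon.
Open Scope R_scope.

Definition qpow (q x : R) : R := Rpower q x.

Definition qnum2 (q z : R) : R := (1 - qpow q (2 * z)) / (1 - q ^ 2).

Fixpoint qfact2 (q : R) (n : nat) : R :=
  match n with
  | O => 1
  | S m => qfact2 q m * qnum2 q (INR (S m))
  end.

Fixpoint qhalf_poch (q : R) (n : nat) : R :=
  match n with
  | O => 1
  | S m => qhalf_poch q m * qnum2 q (1/2 + INR m)
  end.

Fixpoint qpoch_partial (z b : R) (n : nat) : R :=
  match n with
  | O => 1
  | S m => qpoch_partial z b m * (1 - z * b ^ m)
  end.

(* (z; b)_infty : the limit of the partial products (chosen by epsilon;
   the limit exists for |b| < 1) *)
Definition qpoch_inf (z b : R) : R :=
  epsilon (inhabits 0) (fun l => Un_cv (fun n => qpoch_partial z b n) l).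

Definition pi_q (q : R) : R :=
  (1 - q ^ 2) * qpow q (1/4) * (qpoch_inf (q ^ 2) (q ^ 2)) ^ 2
    / (qpoch_inf q (q ^ 2)) ^ 2.

Definition term8 (q : R) (n : nat) : R :=
  (qhalf_poch q n) ^ 2 / (qfact2 q (S n)) ^ 2 * q ^ (4 * n + 4).

(* Main.v *)
Require Import Defs.
From Stdlib Require Import Reals Lra Lia ClassicalEpsilon.
From Coquelicot Require Import Coquelicot.
Open Scope R_scope.

Notation pp := qpoch_partial.

Lemma pow_le_1 x n : 0 <= x <= 1 -> x ^ n <= 1.
Proof. intro H. rewrite <- (pow1 n). apply pow_incr; lra. Qed.

Lemma pp_shift z b n : pp z b (S n) = (1 - z) * pp (z*b) b n.
Proof.
  induction n as [|n IH]; simpl; [ring|].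
  simpl in IH. rewrite IH. ring.
Qed.

Lemma pp_pos z b n : 0 < z < 1 -> 0 < b <= 1 -> 0 < pp z b n /\ pp z b n <= 1.
Proof.
  intros Hz Hb. induction n as [|n IH]; simpl; [lra|].
  assert (0 < b ^ n <= 1). { split. apply pow_lt; lra. apply pow_le_1; lra. }
  assert (0 < z * b ^ n < 1) by nra. nra.
Qed.

Lemma exp_le_1m x : 0 <= x < 1 -> exp (- (x / (1 - x))) <= 1 - x.
Proof.
  intros Hx. set (y := x / (1 - x)).
  assert (Hy: 1 + y <= exp y).
  { destruct (Req_dec y 0) as [E|E]. rewrite E, exp_0; lra. left; apply exp_ineq1; auto. }
  assert (E1 : 1 + y = / (1 - x)) by (unfold y; field; lra).
  rewrite exp_Ropp. rewrite <- (Rinv_inv (1 - x)).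
  apply Rinv_le_contravar. apply Rinv_0_lt_compat; lra. lra.
Qed.

Lemma pp_lower z b n : 0 < z < 1 -> 0 < b < 1 ->
  exp (- (z / ((1 - z) * (1 - b)) * (1 - b ^ n))) <= pp z b n.
Proof.
  intros Hz Hb. induction n as [|n IH]; simpl.
  - replace (- (z / ((1 - z) * (1 - b)) * (1 - 1))) with 0 by ring. rewrite exp_0; lra.
  - assert (Hbn: 0 < b ^ n <= 1). { split. apply pow_lt; lra. apply pow_le_1; lra. }
    set (x := z * b ^ n).
    assert (Hx: 0 < x < 1) by (unfold x; nra).
    assert (H1 := exp_le_1m x ltac:(lra)).
    assert (Hb2: x / (1 - x) <= z / ((1 - z) * (1 - b)) * (b ^ n - b * b ^ n)).
    { unfold x. apply Rmult_le_reg_r with ((1 - z * b ^ n) * ((1 - z) * (1 - b))).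
      apply Rmult_lt_0_compat; nra.
      field_simplify; try nra.
      assert (0 <= z * b^n * (1-b) * z * (1 - b^n)).
      { repeat apply Rmult_le_pos; lra. }
      nra. }
    assert (E: - (z / ((1 - z) * (1 - b)) * (1 - b * b ^ n)) <=
               - (z / ((1 - z) * (1 - b)) * (1 - b ^ n)) + - (x / (1 - x))) by lra.
    apply Rle_trans with (exp (- (z / ((1 - z) * (1 - b)) * (1 - b ^ n)) + - (x / (1 - x)))).
    { destruct E as [E|E]. left; apply exp_increasing; auto. rewrite E; lra. }
    rewrite exp_plus.
    destruct (pp_pos z b n Hz ltac:(lra)).
    apply Rmult_le_compat; try lra; left; apply exp_pos.
Qed.

Lemma pp_cv z b : 0 < z < 1 -> 0 < b < 1 -> exists l, Un_cv (pp z b) l /\ 0 < l.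
Proof.
  intros Hz Hb.
  assert (Hdec : Un_decreasing (pp z b)).
  { intro n. simpl. destruct (pp_pos z b n Hz ltac:(lra)).
    assert (0 < b ^ n). apply pow_lt; lra.
    assert (0 < pp z b n * (z * b ^ n)) by (apply Rmult_lt_0_compat; nra). nra. }
  assert (Hlb : has_lb (pp z b)).
  { unfold has_lb, bound. exists 0. intros x [n Hn]. unfold opp_seq in Hn. subst x.
    destruct (pp_pos z b n Hz ltac:(lra)); lra. }
  destruct (decreasing_cv _ Hdec Hlb) as [l Hl].
  exists l; split; auto.
  set (C := z / ((1 - z) * (1 - b))).
  assert (HC : 0 <= C). { unfold C. apply Rmult_le_pos. lra. left; apply Rinv_0_lt_compat; nra. }
  assert (Hle : forall n, exp (- C) <= pp z b n).
  { intro n. eapply Rle_trans; [|apply pp_lower; auto].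
    assert (0 < b ^ n). apply pow_lt; lra.
    destruct (Rle_lt_or_eq_dec _ _ HC) as [HC'|HC'].
    - left. apply exp_increasing. fold C. nra.
    - fold C. rewrite <- HC'. right. f_equal. ring. }
  assert (H := is_lim_seq_le (fun _ => exp (-C)) (pp z b) (exp (-C)) l Hle
     (is_lim_seq_const _) (proj2 (is_lim_seq_Reals _ _) Hl)).
  simpl in H. assert (0 < exp (- C)) by apply exp_pos. lra.
Qed.

Lemma qpoch_inf_eq z b l : Un_cv (pp z b) l -> qpoch_inf z b = l.
Proof.
  intro H. unfold qpoch_inf.
  assert (Hex : exists l, Un_cv (fun n => pp z b n) l) by (exists l; auto).
  pose proof (epsilon_spec (inhabits 0) _ Hex) as Hs.
  eapply UL_sequence; eauto.
Qed.

Definition Ak (s : R) (k m : nat) : R :=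
  (pp (/s) (s^2) m)^2 / (pp (s^2) (s^2) m * pp ((s^2)^(S k)) (s^2) m)
  * ((s^2)^(S k) * s^2)^m.

Lemma abound s c m : 0 < s < 1 -> 0 < c <= s^2 ->
  Rabs (pp (/s) (s^2) m) <= /s * pp c (s^2) m.
Proof.
  intros Hs Hc.
  assert (Hs2 : 0 < s^2 < 1) by (split; nra).
  assert (His : 1 < /s). { rewrite <- Rinv_1. apply Rinv_lt_contravar; lra. }
  induction m as [|m IH].
  - simpl. rewrite Rabs_R1. lra.
  - change (pp (/s) (s^2) (S m)) with (pp (/s) (s^2) m * (1 - /s * (s^2)^m)).
    change (pp c (s^2) (S m)) with (pp c (s^2) m * (1 - c * (s^2)^m)).
    destruct (pp_pos c (s^2) m ltac:(nra) ltac:(lra)) as [Hp1 Hp2].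
    rewrite Rabs_mult.
    destruct m as [|m].
    + simpl. simpl in IH. rewrite Rabs_R1 in IH.
      rewrite Rabs_R1. rewrite Rabs_left by lra.
      replace (/s) with (/s * 1) at 1 by ring. rewrite Rmult_1_r. rewrite Rmult_1_r.
      assert (c * / s <= 1).
      { apply Rmult_le_reg_r with s. lra. rewrite Rmult_assoc, Rinv_l by lra. nra. }
      simpl in Hp1. nra.
    + assert (Htm : 0 < (s^2)^m <= 1). { split. apply pow_lt; lra. apply pow_le_1; lra. }
      replace (/ s * (s ^ 2) ^ S m) with (s * (s^2)^m) by (simpl; field; lra).
      replace (c * (s ^ 2) ^ S m) with (c * s^2 * (s^2)^m) by (simpl; ring).
      assert (Hf : 0 < 1 - s * (s^2)^m) by nra.
      rewrite (Rabs_right (1 - s * (s^2)^m)) by lra.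
      assert (Hcs : c * s^2 <= s) by nra.
      assert (1 - s * (s ^ 2) ^ m <= 1 - c * s ^ 2 * (s ^ 2) ^ m) by nra.
      apply Rle_trans with (/ s * pp c (s ^ 2) (S m) * (1 - s * (s ^ 2) ^ m)).
      * apply Rmult_le_compat_r; lra.
      * assert (0 < /s) by lra.
        rewrite Rmult_assoc. apply Rmult_le_compat_l. lra. 
        apply Rmult_le_compat_l. lra. lra.
Qed.

Lemma Ak_bound s k m : 0 < s < 1 ->
  0 <= Ak s k m <= / s^2 * ((s^2)^(S k) * s^2)^m.
Proof.
  intros Hs.
  assert (Hs2 : 0 < s^2 < 1) by (split; nra).
  set (c := (s^2)^(S k)).
  assert (Hc : 0 < c <= s^2).
  { unfold c. split. apply pow_lt; lra. change ((s^2)^(S k)) with (s^2 * (s^2)^k).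
    assert (0 < (s^2)^k <= 1). split. apply pow_lt; lra. apply pow_le_1; lra. nra. }
  assert (Hz : 0 <= (c * s^2)^m). { apply pow_le. nra. }
  destruct (pp_pos c (s^2) m ltac:(lra) ltac:(lra)) as [Hc1 _].
  destruct (pp_pos (s^2) (s^2) m ltac:(lra) ltac:(lra)) as [Ht1 _].
  pose proof (abound s c m Hs Hc) as B1.
  pose proof (abound s (s^2) m Hs ltac:(lra)) as B2.
  unfold Ak. fold c.
  set (X := pp (/s) (s^2) m) in *.
  set (Y := pp (s^2) (s^2) m) in *.
  set (Z := pp c (s^2) m) in *.
  set (w := (c * s^2)^m) in *.
  assert (HX2 : X^2 <= (/s * Y) * (/s * Z)).
  { replace (X^2) with (Rabs X * Rabs X) by (rewrite <- Rabs_mult; simpl; rewrite Rmult_1_r; apply Rabs_right; nra).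
    apply Rmult_le_compat; try apply Rabs_pos; lra. }
  split.
  - apply Rmult_le_pos; auto. apply Rmult_le_pos. nra. left; apply Rinv_0_lt_compat; nra.
  - apply Rmult_le_compat_r; auto.
    apply Rmult_le_reg_r with (Y * Z). nra.
    unfold Rdiv. rewrite Rmult_assoc, Rinv_l by nra. rewrite Rmult_1_r.
    replace (/ s ^ 2 * (Y * Z)) with (/ s * Y * (/ s * Z)) by (field; lra). lra.
Qed.

Definition rk s k := let c := (s^2)^(S k) in (1 - s*c)^2/((1-c)*(1-c*s^2)).
Definition Hk s k m := let c := (s^2)^(S k) in - (1 - (s^2)^m) * Ak s k m / (1 - c*s^2).

Lemma Ak_tele s k m : 0 < s < 1 ->
  Ak s k m = rk s k * Ak s (S k) m + (Hk s k (S m) - Hk s k m).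
Proof.
  intros Hs.
  assert (Hs2 : 0 < s^2 < 1) by (split; nra).
  unfold rk, Hk, Ak.
  set (c := (s^2)^(S k)).
  assert (Hc : 0 < c <= s^2).
  { unfold c. split. apply pow_lt; lra. change ((s^2)^(S k)) with (s^2 * (s^2)^k).
    assert (0 < (s^2)^k <= 1). split. apply pow_lt; lra. apply pow_le_1; lra. nra. }
  replace ((s^2)^(S (S k))) with (c * s^2) by (unfold c; change ((s^2)^(S (S k))) with (s^2 * (s^2)^(S k)); ring).
  assert (Hx : 0 < (s^2)^m <= 1). split. apply pow_lt; lra. apply pow_le_1; lra.
  assert (HW : pp (c * s^2) (s^2) m * (1 - c) = pp c (s^2) m * (1 - c * (s^2)^m)).
  { rewrite Rmult_comm, <- pp_shift. reflexivity. }
  change (pp (/s) (s^2) (S m)) with (pp (/s) (s^2) m * (1 - /s * (s^2)^m)).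
  change (pp (s^2) (s^2) (S m)) with (pp (s^2) (s^2) m * (1 - s^2 * (s^2)^m)).
  change (pp c (s^2) (S m)) with (pp c (s^2) m * (1 - c * (s^2)^m)).
  change ((s^2)^(S m)) with (s^2 * (s^2)^m).
  change ((c * s^2)^(S m)) with ((c * s^2) * (c*s^2)^m).
  rewrite (Rpow_mult_distr (c * s^2) (s^2) m).
  destruct (pp_pos c (s^2) m ltac:(lra) ltac:(lra)) as [Hc1 _].
  destruct (pp_pos (s^2) (s^2) m ltac:(lra) ltac:(lra)) as [Ht1 _].
  destruct (pp_pos (c*s^2) (s^2) m ltac:(nra) ltac:(lra)) as [Hw1 _].
  set (X := pp (/s) (s^2) m) in *.
  set (Y := pp (s^2) (s^2) m) in *.
  set (Z := pp c (s^2) m) in *.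
  set (W := pp (c*s^2) (s^2) m) in *.
  set (x := (s^2)^m) in *.
  set (w := (c * s^2)^m) in *.
  assert (HWe : W = Z * (1 - c * x) / (1 - c)) by (rewrite <- HW; field; lra).
  rewrite HWe.
  assert (0 < 1 - c * x) by nra.
  assert (0 < 1 - s^2 * x) by nra.
  assert (0 < 1 - c * s^2) by nra.
  field. repeat split; try lra; nra.
Qed.

Lemma zk_bound s k : 0 < s < 1 -> 0 < (s^2)^(S k) * s^2 <= s^2 * s^2.
Proof.
  intros Hs. assert (Hs2 : 0 < s^2 < 1) by (split; nra).
  change ((s^2)^(S k)) with (s^2 * (s^2)^k).
  assert (0 < (s^2)^k <= 1). split. apply pow_lt; lra. apply pow_le_1; lra.
  set (y := s^2) in *. set (p := y^k) in *.
  split. repeat apply Rmult_lt_0_compat; lra.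
  apply Rmult_le_compat_r. lra. assert (y * p <= y * 1) by (apply Rmult_le_compat_l; lra). lra.
Qed.

Lemma Ak_geom_ex s k : 0 < s < 1 -> ex_series (fun m => / s^2 * ((s^2)^(S k) * s^2)^m).
Proof.
  intros Hs. pose proof (zk_bound s k Hs).
  apply (ex_series_scal_l (/ s^2) (fun m => ((s^2)^(S k) * s^2)^m)).
  assert (Hs2 : 0 < s^2 < 1) by (split; nra).
  assert (s^2 * s^2 < 1) by nra.
  eexists. apply is_series_geom. rewrite Rabs_right by lra. lra.
Qed.

Lemma Ak_ex s k : 0 < s < 1 -> ex_series (Ak s k).
Proof.
  intros Hs. apply (@ex_series_le R_AbsRing R_CompleteNormedModule _ (fun m => / s^2 * ((s^2)^(S k) * s^2)^m)).
  - intro n. change (norm (Ak s k n)) with (Rabs (Ak s k n)).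
    destruct (Ak_bound s k n Hs). rewrite Rabs_right; lra.
  - apply Ak_geom_ex; auto.
Qed.

Lemma Ak_lim0 s k : 0 < s < 1 -> is_lim_seq (Ak s k) 0.
Proof.
  intros Hs. pose proof (zk_bound s k Hs).
  apply is_lim_seq_le_le with (fun _ => 0) (fun m => / s^2 * ((s^2)^(S k) * s^2)^m).
  - intro n. apply Ak_bound; auto.
  - apply is_lim_seq_const.
  - replace 0 with (/ s^2 * 0) by ring.
    apply (is_lim_seq_scal_l _ (/ s^2) 0). apply is_lim_seq_geom.
    assert (Hs2 : 0 < s^2 < 1) by (split; nra).
    assert (s^2 * s^2 < 1) by nra.
    rewrite Rabs_right by lra. lra.
Qed.

Lemma sum_tele (H : nat -> R) N : sum_f_R0 (fun m => H (S m) - H m) N = H (S N) - H 0%nat.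
Proof. induction N; simpl; [ring|]. rewrite IHN. ring. Qed.

Lemma F_rec s k : 0 < s < 1 -> Series (Ak s k) = rk s k * Series (Ak s (S k)).
Proof.
  intros Hs.
  assert (Hs2 : 0 < s^2 < 1) by (split; nra).
  pose proof (zk_bound s k Hs) as Hz.
  set (c := (s^2)^(S k)) in *.
  assert (HT : is_series (fun m => Hk s k (S m) - Hk s k m) 0).
  { apply is_series_Reals. unfold infinite_sum.
    intros eps Heps.
    assert (HL : is_lim_seq (fun m => Hk s k (S m)) 0).
    { unfold Hk. fold c.
      apply (is_lim_seq_incr_1 (fun m => - (1 - (s ^ 2) ^ m) * Ak s k m / (1 - c * s ^ 2)) 0).
      apply is_lim_seq_abs_0.
      apply is_lim_seq_le_le with (fun _ => 0) (fun m => Ak s k m / (1 - c * s^2)).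
      - intro n. split. apply Rabs_pos.
        assert (0 < (s^2)^n <= 1). split. apply pow_lt; lra. apply pow_le_1; lra.
        destruct (Ak_bound s k n Hs).
        assert (0 < 1 - c * s^2) by nra.
        unfold Rdiv. rewrite !Rabs_mult. rewrite Rabs_Ropp.
        rewrite (Rabs_right (Ak s k n)) by lra.
        rewrite (Rabs_right (/ (1 - c*s^2))) by (left; apply Rinv_0_lt_compat; lra).
        rewrite (Rabs_right (1 - (s^2)^n)) by lra.
        assert (0 < / (1 - c * s^2)) by (apply Rinv_0_lt_compat; lra).
        rewrite Rmult_assoc.
        assert (0 <= Ak s k n * / (1 - c * s^2)) by nra. nra.
      - apply is_lim_seq_const.
      - replace 0 with (0 * / (1 - c * s^2)) by ring.
        apply (is_lim_seq_scal_r _ _ 0). apply Ak_lim0; auto. }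
    apply is_lim_seq_Reals in HL.
    destruct (HL eps Heps) as [N HN]. exists N. intros n Hn.
    assert (H0 : Hk s k 0 = 0) by (unfold Hk; rewrite pow_O; unfold Rdiv; ring).
    rewrite sum_tele, H0.
    rewrite Rminus_0_r. apply HN; auto. }
  assert (HS := Series_correct _ (Ak_ex s (S k) Hs)).
  assert (H2 := is_series_scal (rk s k) _ _ HS).
  assert (H3 := is_series_plus _ _ _ _ H2 HT).
  apply is_series_unique.
  replace (rk s k * Series (Ak s (S k))) with (plus (scal (rk s k) (Series (Ak s (S k)))) 0)
    by (change (rk s k * Series (Ak s (S k)) + 0 = rk s k * Series (Ak s (S k))); ring).
  eapply is_series_ext; [|exact H3].
  intro n. simpl. change (plus (scal (rk s k) (Ak s (S k) n)) (Hk s k (S n) - Hk s k n)) with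
    (rk s k * Ak s (S k) n + (Hk s k (S n) - Hk s k n)).
  rewrite <- Ak_tele; auto.
Qed.

Lemma chain s K : 0 < s < 1 ->
  Series (Ak s 0) * (1 - s)^2 * pp (s^2) (s^2) K * pp (s^2) (s^2) (S K)
  = (pp s (s^2) (S K))^2 * (1 - s^2) * Series (Ak s K).
Proof.
  intros Hs. assert (Hs2 : 0 < s^2 < 1) by (split; nra).
  induction K as [|K IH].
  - simpl. ring.
  - rewrite (F_rec s K Hs) in IH. unfold rk in IH.
    set (c := (s^2)^(S K)) in *.
    pose proof (zk_bound s K Hs) as Hz. fold c in Hz.
    assert (Hc : 0 < c < 1). { split. unfold c; apply pow_lt; lra.
       assert (c * s^2 < s^2) by nra. nra. }
    change (pp (s^2) (s^2) (S K)) with (pp (s^2) (s^2) K * (1 - s^2 * (s^2)^K)) in *.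
    change (pp (s^2) (s^2) (S (S K))) with (pp (s^2) (s^2) (S K) * (1 - s^2 * (s^2)^(S K))).
    change (pp (s^2) (s^2) (S K)) with (pp (s^2) (s^2) K * (1 - s^2 * (s^2)^K)).
    change (pp s (s^2) (S (S K))) with (pp s (s^2) (S K) * (1 - s * (s^2)^(S K))).
    change (s^2 * (s^2)^K) with ((s^2)^(S K)) in *. fold c in IH |- *.
    assert (0 < 1 - c * s^2) by nra.
    set (G := Series (Ak s (S K))) in *.
    set (P := pp s (s^2) (S K)) in *.
    set (Q := pp (s^2) (s^2) K) in *.
    set (F0 := Series (Ak s 0)) in *.
    transitivity ((F0 * (1 - s) ^ 2 * Q * (Q * (1 - c))) * ((1-c)*(1-s^2*c))); [ring|].
    rewrite IH. field. lra.
Qed.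

Lemma Ak0 s k : Ak s k 0 = 1.
Proof. unfold Ak. simpl. field. Qed.

Lemma FK_bound s K : 0 < s < 1 ->
  1 <= Series (Ak s K) <= 1 + / s^2 * ((s^2)^(S K) * s^2) / (1 - s^2 * s^2).
Proof.
  intros Hs. assert (Hs2 : 0 < s^2 < 1) by (split; nra).
  pose proof (zk_bound s K Hs) as Hz.
  set (z := (s^2)^(S K) * s^2) in *.
  assert (Hs4 : s^2 * s^2 < 1 * 1) by (apply Rmult_le_0_lt_compat; lra).
  assert (Hz1 : z < 1) by lra.
  rewrite (Series_incr_1 _ (Ak_ex s K Hs)), Ak0.
  assert (Hge : is_series (fun m => (/ s^2 * z) * z^m) (/ s^2 * z * / (1 - z))).
  { apply (is_series_scal (/ s^2 * z) (fun m => z^m)). apply is_series_geom.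
    rewrite Rabs_right; lra. }
  assert (Hle : Series (fun k => Ak s K (S k)) <= / s^2 * z * / (1 - z)).
  { rewrite <- (is_series_unique _ _ Hge). apply Series_le.
    - intro n. destruct (Ak_bound s K (S n) Hs). fold z in H0. split; auto.
      change (z^(S n)) with (z * z^n) in H0. lra.
    - eexists; eauto. }
  assert (Hge0 : 0 <= Series (fun k => Ak s K (S k))).
  { apply Rle_trans with (Series (fun k => 0 * Ak s K (S k))).
    rewrite Series_scal_l; lra.
    apply Series_le. intro n. split. lra. rewrite Rmult_0_l. apply Ak_bound; auto.
    apply (ex_series_incr_1 (Ak s K)). apply Ak_ex; auto. }
  split. lra.
  assert (/ s^2 * z * / (1 - z) <= / s^2 * z / (1 - s^2 * s^2)).
  { unfold Rdiv. apply Rmult_le_compat_l.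
    apply Rmult_le_pos. left; apply Rinv_0_lt_compat; lra. lra.
    apply Rinv_le_contravar; nra. }
  lra.
Qed.

Lemma FK_lim s : 0 < s < 1 -> is_lim_seq (fun K => Series (Ak s K)) 1.
Proof.
  intros Hs. assert (Hs2 : 0 < s^2 < 1) by (split; nra).
  apply is_lim_seq_le_le with (fun _ => 1)
     (fun K => 1 + / s^2 * ((s^2)^(S K) * s^2) / (1 - s^2 * s^2)).
  - intro n. apply FK_bound; auto.
  - apply is_lim_seq_const.
  - replace (Finite 1) with (Rbar_plus 1 (/ s^2 * ((0 * s^2)) / (1 - s^2 * s^2))).
    2:{ simpl. f_equal. field. nra. }
    apply is_lim_seq_plus'. apply is_lim_seq_const.
    unfold Rdiv.
    apply (is_lim_seq_scal_r _ (/ (1 - s^2 * s^2)) (/ s^2 * (0 * s^2))).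
    apply (is_lim_seq_scal_l _ (/ s^2) (0 * s^2)).
    apply (is_lim_seq_scal_r _ (s^2) 0).
    apply (is_lim_seq_incr_1 (fun n => (s^2)^n) 0).
    apply is_lim_seq_geom. rewrite Rabs_right; lra.
Qed.

Lemma Rpow_nat q n : 0 < q -> Rpower q (INR n) = q ^ n.
Proof. intros; apply Rpower_pow; auto. Qed.

Lemma qf_eq q n : 0 < q < 1 -> qfact2 q n = pp (q^2) (q^2) n / (1 - q^2)^n.
Proof.
  intros Hq. assert (0 < 1 - q^2) by nra.
  induction n as [|n IH]. simpl; field.
  change (qfact2 q (S n)) with (qfact2 q n * qnum2 q (INR (S n))).
  change (pp (q^2) (q^2) (S n)) with (pp (q^2) (q^2) n * (1 - q^2 * (q^2)^n)).
  rewrite IH. unfold qnum2, qpow.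
  replace (2 * INR (S n)) with (INR (2 * S n)) by (rewrite mult_INR; reflexivity).
  rewrite Rpow_nat by lra. rewrite pow_mult.
  change ((q^2)^(S n)) with (q^2 * (q^2)^n).
  change ((1 - q^2)^(S n)) with ((1 - q^2) * (1 - q^2)^n).
  field. split. apply pow_nonzero. lra. lra.
Qed.

Lemma qh_eq q n : 0 < q < 1 -> qhalf_poch q n = pp q (q^2) n / (1 - q^2)^n.
Proof.
  intros Hq. assert (0 < 1 - q^2) by nra.
  induction n as [|n IH]. simpl; field.
  change (qhalf_poch q (S n)) with (qhalf_poch q n * qnum2 q (1/2 + INR n)).
  change (pp q (q^2) (S n)) with (pp q (q^2) n * (1 - q * (q^2)^n)).
  rewrite IH. unfold qnum2, qpow.
  replace (2 * (1/2 + INR n)) with (INR (S (2 * n))) by (rewrite S_INR, mult_INR; simpl; field).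
  rewrite Rpow_nat by lra. rewrite <- pow_mult.
  change (q ^ S (2*n)) with (q * q^(2*n)).
  change ((1 - q^2)^(S n)) with ((1 - q^2) * (1 - q^2)^n).
  field. split. apply pow_nonzero. lra. lra.
Qed.

Lemma term8_eq q n : 0 < q < 1 -> term8 q n = q^2 * (1+q)^2 * Ak q 0 (S n).
Proof.
  intros Hq. assert (0 < 1 - q^2) by nra.
  unfold term8, Ak. rewrite qf_eq, qh_eq by auto.
  rewrite (pp_shift (/q)).
  replace (/ q * q^2) with q by (field; lra).
  replace ((q^2)^1) with (q^2) by ring.
  replace ((q ^ 2 * q ^ 2) ^ S n) with (q ^ (4 * n + 4)).
  2:{ replace (q^2*q^2) with (q^4) by ring. rewrite <- pow_mult. f_equal. lia. }
  destruct (pp_pos (q^2) (q^2) (S n) ltac:(nra) ltac:(nra)).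
  assert (0 < (1 - q^2)^n) by (apply pow_lt; lra).
  change ((1 - q^2)^(S n)) with ((1 - q^2) * (1 - q^2)^n).
  field. repeat split; lra.
Qed.

Lemma Ak01 q : 0 < q < 1 -> Ak q 0 1 = q^2 / (1+q)^2.
Proof. intros Hq. unfold Ak. simpl. field. repeat split; nra. Qed.

Theorem mainTheorem8 (q : R) (hq0 : 0 < q) (hq1 : q < 1) :
  exists L : R,
    infinite_sum (fun n => term8 q (S n)) L /\
    q ^ 2 * (1 + q) ^ 2 + q ^ 4 + L = (1 + q) ^ 4 / pi_q q * qpow q (9/4).
Proof.
  assert (Hq : 0 < q < 1) by lra.
  assert (Ht : 0 < q^2 < 1) by (split; nra).
  destruct (pp_cv q (q^2) Hq Ht) as [l1 [Hl1 Hl1p]].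
  destruct (pp_cv (q^2) (q^2) Ht Ht) as [l2 [Hl2 Hl2p]].
  set (F0 := Series (Ak q 0)).
  assert (Hex0 := Ak_ex q 0 Hq).
  assert (Hex2 : ex_series (fun k => Ak q 0 (S (S k)))).
  { apply (ex_series_incr_1 (fun k => Ak q 0 (S k))). apply (ex_series_incr_1 (Ak q 0)). auto. }
  set (R2 := Series (fun k => Ak q 0 (S (S k)))).
  assert (HF0 : F0 = 1 + q^2/(1+q)^2 + R2).
  { unfold F0, R2. rewrite (Series_incr_1 _ Hex0), Ak0.
    rewrite (Series_incr_1 _ (proj1 (ex_series_incr_1 _) Hex0)). rewrite Ak01; auto. ring. }
  assert (Hrel : F0 * (1 - q)^2 * l2 * l2 = l1 * l1 * (1 - q^2) * 1).
  { apply is_lim_seq_Reals in Hl1. apply is_lim_seq_Reals in Hl2.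
    assert (A1 : is_lim_seq (fun K => F0 * (1 - q)^2 * pp (q^2) (q^2) K * pp (q^2) (q^2) (S K))
                   (F0 * (1 - q)^2 * l2 * l2)).
    { apply is_lim_seq_mult'. apply is_lim_seq_mult'. apply is_lim_seq_const. auto.
      apply (is_lim_seq_incr_1 (pp (q^2) (q^2)) l2). auto. }
    assert (B : is_lim_seq (fun K => pp q (q^2) (S K)) l1)
      by (apply (is_lim_seq_incr_1 (pp q (q^2)) l1); auto).
    assert (A2 : is_lim_seq (fun K => (pp q (q^2) (S K))^2 * (1 - q^2) * Series (Ak q K))
                   (l1 * l1 * (1 - q^2) * 1)).
    { apply is_lim_seq_mult'. apply is_lim_seq_mult'.
      - eapply is_lim_seq_ext; [|apply (is_lim_seq_mult' _ _ _ _ B B)].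
        intro n. simpl. ring.
      - apply is_lim_seq_const.
      - apply FK_lim; auto. }
    assert (A3 : is_lim_seq (fun K => F0 * (1 - q)^2 * pp (q^2) (q^2) K * pp (q^2) (q^2) (S K))
                   (l1 * l1 * (1 - q^2) * 1)).
    { eapply is_lim_seq_ext; [|exact A2]. intro K. symmetry. apply chain; auto. }
    apply is_lim_seq_unique in A1. apply is_lim_seq_unique in A3.
    rewrite A1 in A3. injection A3. auto. }
  exists (q^2 * (1+q)^2 * R2). split.
  - apply is_series_Reals.
    assert (HS := is_series_scal (q^2*(1+q)^2) _ _ (Series_correct _ Hex2)).
    change (is_series (fun n => term8 q (S n)) (scal (q^2*(1+q)^2) R2)).
    eapply is_series_ext; [|exact HS].
    intro n. change (q^2 * (1+q)^2 * Ak q 0 (S (S n)) = term8 q (S n)).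
    rewrite term8_eq; auto.
  - unfold pi_q.
    rewrite (qpoch_inf_eq _ _ _ Hl1), (qpoch_inf_eq _ _ _ Hl2).
    unfold qpow.
    replace (9/4) with (INR 2 + 1/4) by (simpl; field).
    rewrite Rpower_plus, Rpow_nat by lra.
    assert (Hp : 0 < Rpower q (1/4)) by (unfold Rpower; apply exp_pos).
    assert (HF : F0 = l1^2 * (1 - q^2) / ((1-q)^2 * l2^2)).
    { apply Rmult_eq_reg_r with ((1-q)^2 * l2^2). 2:{ apply Rgt_not_eq. apply Rmult_lt_0_compat; nra. }
      field_simplify; try nra. }
    assert (R2e : R2 = F0 - 1 - q^2/(1+q)^2) by lra.
    rewrite R2e, HF.
    field. repeat split; nra.
Qed.
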